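(* Let $m\geq 13$ and $n\geq 13$ be integers with $m\not\equiv 2\pmod 3$ and $n\not\equiv 2\pmod 3$. Then $\gamma_{sR}(C_m\vee C_n)=3$.
   Context: $C_n$ denotes the cycle on $n$ vertices. For a graph $G=(V,E)$ and $x\in V$, $N_G[x]=\{x\}\cup\{y: xy\in E\}$. A signed Roman dominating function (SRDF) on $G$ is a function $f:V\to\{-1,1,2\}$ such that (a) $\sum_{y\in N_G[x]}f(y)\geq 1$ for every $x\in V$, and (b) every vertex $x$ with $f(x)=-1$ is adjacent to at least one vertex $y$ with $f(y)=2$. The weight of $f$ is $\sum_{x\in V}f(x)$, and $\gamma_{sR}(G)$ is the minimum weight of an SRDF on $G$. The join $G_1\vee G_2$ of two graphs has vertex set $V(G_1)\cup V(G_2)$ (disjoint union) and edge set $E(G_1)\cup E(G_2)\cup\{uv: u\in V(G_1), v\in V(G_2)\}$. *)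

(* Defs.v *)
From mathcomp Require Import all_boot all_order all_algebra.
Set Implicit Arguments. Unset Strict Implicit. Unset Printing Implicit Defensive.
Import Order.TTheory GRing.Theory Num.Theory.
Local Open Scope ring_scope.

Definition closed_nbhd (T : finType) (adj : rel T) (x : T) : {set T} :=
  [set y | (y == x) || adj x y].

Definition is_SRDF (T : finType) (adj : rel T) (f : T -> int) : Prop :=
  (forall x, f x \in [:: -1; 1; 2]) /\
  (forall x, 1 <= \sum_(y in closed_nbhd adj x) f y) /\
  (forall x, f x = -1 -> exists y, adj x y /\ f y = 2).

Definition srdf_weight (T : finType) (f : T -> int) : int := \sum_(x : T) f x.

Definition signed_roman_domination_number_is (T : finType) (adj : rel T) (k : int) : Prop :=
  (exists f, is_SRDF adj f /\ srdf_weight f = k) /\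
  (forall f, is_SRDF adj f -> k <= srdf_weight f).

Definition cycle_adj (k : nat) : rel 'I_k :=
  fun i j => (j == (i.+1 %% k)%N :> nat) || (i == (j.+1 %% k)%N :> nat).
Arguments cycle_adj : clear implicits.

Definition join_adj (T1 T2 : finType) (a1 : rel T1) (a2 : rel T2) : rel (T1 + T2)%type :=
  fun u v => match u, v with
             | inl x, inl y => a1 x y
             | inr x, inr y => a2 x y
             | _, _ => true
             end.

(* Main.v *)
Require Import Defs.
From mathcomp Require Import all_boot all_order all_algebra.
From mathcomp Require Import zify ring lra.
Set Implicit Arguments. Unset Strict Implicit. Unset Printing Implicit Defensive.
Import Order.TTheory GRing.Theory Num.Theory.
Local Open Scope ring_scope.


Definition periodic (N : nat) (g : nat -> int) := forall k, g (k + N)%N = g k.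
Definition V (g : nat -> int) k := g k + g k.+1 + g k.+2.

Lemma rot (N c : nat) g : periodic N g ->
  \sum_(0 <= k < N) g (k + c)%N = \sum_(0 <= k < N) g k.
Proof.
move=> Pg; elim: c => [|c IH]; first by apply: eq_bigr => k _; rewrite addn0.
case: N Pg IH => [|N] Pg IH; first by rewrite !big_geq.
rewrite big_nat_recr // -IH big_nat_recl // addrC; congr (_ + _).
  by apply: eq_bigr => k _; rewrite addSnnS.
by rewrite add0n (_ : (N + c.+1 = c + N.+1)%N) ?Pg //; lia.
Qed.


Lemma periodicV N g : periodic N g -> periodic N (V g).
Proof. by move=> P k; rewrite /V -!addSn !P. Qed.

Lemma sumV N g : periodic N g -> \sum_(0 <= k < N) V g k = 3 * \sum_(0 <= k < N) g k.
Proof.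
move=> P; rewrite /V !big_split /=.
have -> : \sum_(0 <= i < N) g i.+1 = \sum_(0 <= k < N) g k.
  by rewrite -(rot 1 P); apply: eq_bigr => k _; rewrite addn1.
have -> : \sum_(0 <= i < N) g i.+2 = \sum_(0 <= k < N) g k.
  by rewrite -(rot 2 P); apply: eq_bigr => k _; rewrite addn2.
ring.
Qed.

Lemma blocks (q j : nat) g :
  \sum_(0 <= t < q) V g (3 * t + j)%N = \sum_(0 <= k < 3 * q) g (k + j)%N.
Proof.
elim: q => [|q IH]; first by rewrite !big_geq.
rewrite big_nat_recr // IH (_ : (3 * q.+1 = (3*q).+2.+1)%N); last lia.
rewrite !big_nat_recr //= /V -!addrA; congr (_ + (_ + (_ + _))); congr g; lia.
Qed.

Lemma vals (x : int) : x \in [:: -1; 1; 2] -> [\/ x = -1, x = 1 | x = 2].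
Proof. by rewrite !inE => /or3P [] /eqP ->; [apply: Or31|apply: Or32|apply: Or33]. Qed.

Lemma periodic_mod N g k : periodic N g -> g (k %% N)%N = g k.
Proof.
move=> P; rewrite {2}(divn_eq k N); elim: (k %/ N)%N => [|d IH]; first by rewrite mul0n add0n.
by rewrite IH mulSn -addnA [(N + _)%N]addnC P.
Qed.

Lemma sum_ge4 N (F : nat -> int) : (4 <= N)%N -> (forall k, 0 <= F k) ->
  F 0%N + F 1%N + F 2%N + F 3%N <= \sum_(0 <= k < N) F k.
Proof.
move=> HN F0; rewrite (big_cat_nat _ (n := 4)) //=.
rewrite !big_nat_recl // big_geq // addr0 -addrA.
by rewrite !addrA lerDl sumr_ge0.
Qed.

Lemma Vpos1 (a b c : int) : a \in [:: -1; 1; 2] -> b \in [:: -1; 1; 2] -> c \in [:: -1; 1; 2] ->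
  0 <= a + b + c -> (a = 1 \/ b = 1 \/ c = 1) -> 1 <= a + b + c.
Proof. by move=> /vals[]->/vals[]->/vals[]->; lia. Qed.

Lemma K N g : (13 <= N)%N -> (N %% 3 != 2)%N -> periodic N g ->
  (forall k, g k \in [:: -1; 1; 2]) -> \sum_(0 <= k < N) g k = 1 ->
  (forall k, 0 <= V g k) -> False.
Proof.
move=> HN H3 P Hv S HV.
have sV := sumV P; rewrite S mulr1 in sV.
have PV := periodicV P.
have HNq := divn_eq N 3.
have : (N %% 3 = 0 \/ N %% 3 = 1)%N by lia.
case=> Hr; rewrite Hr ?addn0 in HNq.
-
  set q := (N %/ 3)%N in HNq.
  have Vle1 : forall x, V g x <= 1.
    move=> x; have := blocks q x g; rewrite mulnC -HNq (rot x P) S.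
    have : (0 < q)%N by lia.
    case: (q) => // q' _; rewrite big_nat_recl // muln0 add0n => <-.
    by rewrite lerDl sumr_ge0.
  case: (boolP [exists k : 'I_N, g k == 1]).
  + case/existsP => x /eqP gx.
    set z := (x + N - 2)%N.
    have gz : g z.+2 = 1 by rewrite (_ : z.+2 = x + N)%N ?P //; rewrite /z; lia.
    have V0 : 1 <= V g z by apply: Vpos1 => //; [exact: HV | right; right].
    have V1 : 1 <= V g z.+1 by apply: Vpos1 => //; [exact: HV | right; left].
    have V2 : V g z.+2 = 1.
      have := Vle1 z.+2; have : 1 <= V g z.+2 by apply: Vpos1 => //; [exact: HV | left].
      lia.
    have V3 : 1 <= V g z.+3.
      move: V2; rewrite /V gz => V2.
      apply: Vpos1 => //; first exact: (HV z.+3).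
      move: (Hv z.+3) (Hv z.+4) V2 => /vals[]->/vals[]->; lia.
    have := @sum_ge4 N (fun k => V g (k + z)%N) (leq_trans (isT : (4 <= 13)%N) HN) (fun k => HV _).
    rewrite (rot z PV) sV !addSn !add0n; lia.
  + move/existsPn => no1.
    have no1' : forall k, g k != 1.
      by move=> k; rewrite -(periodic_mod k P) (_ : k %% N = Ordinal (ltn_pmod k (ltn_trans _ HN)))%N ?no1.
    have V0 : forall k, V g k = 0.
      move=> k; have := Vle1 k; have := HV k; have := no1' k; have := no1' k.+1; have := no1' k.+2.
      by rewrite /V; move: (Hv k) (Hv k.+1) (Hv k.+2) => /vals[]->/vals[]->/vals[]->; lia.
    by move: sV; rewrite big1 // => k _; rewrite V0.
-
  set q := (N %/ 3)%N in HNq.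
  have gle1 : forall y, g y <= 1.
    move=> y; have := blocks q y.+1 g; have := rot y.+1 P; rewrite S HNq addn1 big_nat_recr //.
    rewrite (_ : (q * 3 + y.+1 = y + N)%N); last lia.
    rewrite P [(3 * q)%N]mulnC => H1 H2; rewrite -H2 in H1.
    have : 0 <= \sum_(0 <= t < q) V g (3 * t + y.+1)%N by rewrite sumr_ge0.
    move: (\sum_(0 <= t < q) V g (3 * t + y.+1)%N) H1 => s H1 h0; simpl in H1; lia.
  have V1 : forall k, 1 <= V g k.
    move=> k; have := gle1 k; have := gle1 k.+1; have := gle1 k.+2; have := HV k.
    by rewrite /V; move: (Hv k) (Hv k.+1) (Hv k.+2) => /vals[]->/vals[]->/vals[]->; lia.
  have : \sum_(0 <= k < N) (1 : int) <= \sum_(0 <= k < N) V g k by apply: ler_sum.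
  rewrite sV sumr_const_nat subn0 ler_nat; lia.
Qed.



Lemma modS_spec p x : (x < p.+1)%N ->
  (x = p /\ x.+1 %% p.+1 = 0 \/ x < p /\ x.+1 %% p.+1 = x.+1)%N.
Proof.
move=> hx; case: (ltngtP x p) => h.
- by right; split=> //; rewrite modn_small.
- lia.
- by left; split=> //; rewrite h modnn.
Qed.

Lemma modP_spec p x : (x < p.+1)%N ->
  (x = 0 /\ (x + p) %% p.+1 = p \/ 0 < x /\ (x + p) %% p.+1 = x.-1)%N.
Proof.
move=> hx; case: x hx => [|x] hx.
- by left; split=> //; rewrite add0n modn_small.
- by right; split=> //; rewrite addSnnS addnC modnDl modn_small // ltnW.
Qed.

Lemma cyc_sum (p : nat) (h : 'I_p.+1 -> int) (i : 'I_p.+1) : (2 <= p)%N ->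
  \sum_(j in [set j | (j == i) || cycle_adj p.+1 i j]) h j =
  h (inZp (i + p)) + h i + h (inZp i.+1).
Proof.
move=> hp.
have hi := ltn_ord i.
have F1 := modS_spec hi; have F2 := modP_spec hi.
have hb : ((i + p) %% p.+1 < p.+1)%N by rewrite ltn_pmod.
have F3 := modS_spec hb.
rewrite (bigD1 i) ?inE ?eqxx //= (bigD1 (inZp i.+1)) /=; last first.
  rewrite inE /cycle_adj -!val_eqE /=.
  clear hb; move: F1 F2 F3; move: (((i + p) %% p.+1).+1 %% p.+1)%N => c.
  move: ((i + p) %% p.+1)%N => b; move: (i.+1 %% p.+1)%N => a; lia.
rewrite (bigD1 (inZp (i + p))) /=; last first.
  rewrite inE /cycle_adj -!val_eqE /=.
  clear hb; move: F1 F2 F3; move: (((i + p) %% p.+1).+1 %% p.+1)%N => c.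
  move: ((i + p) %% p.+1)%N => b; move: (i.+1 %% p.+1)%N => a; lia.
rewrite big1 ?addr0.
  ring.
move=> j; rewrite inE /cycle_adj -!val_eqE /=.
have F4 := modS_spec (ltn_ord j).
clear hb; move: F1 F2 F3 F4; move: (((i + p) %% p.+1).+1 %% p.+1)%N => c.
move: ((i + p) %% p.+1)%N => b; move: (i.+1 %% p.+1)%N => a; move: (j.+1 %% p.+1)%N => d; lia.
Qed.

Lemma nb_inl M N (f : 'I_M + 'I_N -> int) (i : 'I_M) :
  \sum_(y in closed_nbhd (join_adj (cycle_adj M) (cycle_adj N)) (inl i)) f y =
  \sum_(j in [set j | (j == i) || cycle_adj M i j]) f (inl j) + \sum_j f (inr j).
Proof.
rewrite big_mkcond big_sumType /=; congr (_ + _); first rewrite [RHS]big_mkcond;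
  by apply: eq_bigr => j _; rewrite !inE.
Qed.

Lemma nb_inr M N (f : 'I_M + 'I_N -> int) (i : 'I_N) :
  \sum_(y in closed_nbhd (join_adj (cycle_adj M) (cycle_adj N)) (inr i)) f y =
  \sum_j f (inl j) + \sum_(j in [set j | (j == i) || cycle_adj N i j]) f (inr j).
Proof.
rewrite big_mkcond big_sumType /=; congr (_ + _); last rewrite [RHS]big_mkcond;
  by apply: eq_bigr => j _; rewrite !inE.
Qed.

Lemma inZp_add p (x y : nat) : inZp (@inZp p x + y)%N = inZp (x + y) :> 'I_p.+1.
Proof. by apply: val_inj => /=; rewrite modnDml. Qed.

Lemma side p (h : 'I_p.+1 -> int) (G : int) : (2 <= p)%N ->
  (forall i, h i \in [:: -1; 1; 2]) ->
  (forall i, 1 <= \sum_(j in [set j | (j == i) || cycle_adj p.+1 i j]) h j + G) ->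
  periodic p.+1 (fun k => h (inZp k)) /\ (forall k, h (inZp k) \in [:: -1; 1; 2]) /\
  (forall k, 1 <= V (fun k => h (inZp k)) k + G) /\
  \sum_(0 <= k < p.+1) h (inZp k) = \sum_i h i.
Proof.
move=> hp Hv Hw.
have P : periodic p.+1 (fun k => h (inZp k)).
  by move=> k; congr h; apply: val_inj => /=; rewrite modnDr.
split=> //; split=> //; split; last first.
  by rewrite big_mkord; apply: eq_bigr => i _; rewrite valZpK.
move=> k; have := Hw (inZp k.+1); rewrite cyc_sum // /V.
rewrite inZp_add -(addn1 (inZp k.+1)) inZp_add addn1.
have -> : h (inZp (k.+1 + p)) = h (inZp k) by have := P k; rewrite addnS addSn.
by [].
Qed.



Definition Q (M : nat) (e : int) (k : nat) : int :=
  if (k %% 3 == 0)%N then (if (M <= k + 3)%N then e else 2)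
  else if (M <= k + 2)%N && (k %% 3 == 1)%N then 1 else -1.

Lemma Q0a M e k : (k %% 3 = 0)%N -> (M <= k + 3)%N -> Q M e k = e.
Proof. by rewrite /Q => -> ->. Qed.
Lemma Q0b M e k : (k %% 3 = 0)%N -> (k + 3 < M)%N -> Q M e k = 2.
Proof. by rewrite /Q => -> h; rewrite ifF //; lia. Qed.
Lemma Q1a M e k : (k %% 3 = 1)%N -> (M <= k + 2)%N -> Q M e k = 1.
Proof. by rewrite /Q => -> h; rewrite /= h. Qed.
Lemma Qm M e k : ((k %% 3 = 1)%N /\ (k + 2 < M)%N) \/ (k %% 3 = 2)%N -> Q M e k = -1.
Proof. by rewrite /Q => h; rewrite ifF ?ifF //; lia. Qed.

Lemma Qin M e k : (e = 1 \/ e = 2) -> Q M e k \in [:: -1; 1; 2].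
Proof. by case=> ->; rewrite /Q; repeat case: ifP => _. Qed.

Lemma Qge M e k : (e = 1 \/ e = 2) -> -1 <= Q M e k.
Proof. by case=> ->; rewrite /Q; repeat case: ifP => _. Qed.

Lemma Qge0 M e k : (e = 1 \/ e = 2) -> (k %% 3 = 0)%N -> e <= Q M e k.
Proof. by case=> -> h; rewrite /Q h /=; case: ifP. Qed.

Lemma sumP M e t : (3 * t < M)%N -> \sum_(0 <= k < 3 * t) Q M e k = 0.
Proof.
elim: t => [|t IH] h; first by rewrite big_geq.
rewrite (_ : (3 * t.+1 = (3*t).+2.+1)%N); last lia.
rewrite !big_nat_recr //= IH; last lia.
rewrite (@Q0b M e (3 * t)); [|lia|lia].
rewrite (@Qm M e (3 * t).+1); last lia.
rewrite (@Qm M e (3 * t).+2); last lia.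
by [].
Qed.

Lemma sumQ M e : (3 <= M)%N -> (M %% 3 != 2)%N -> \sum_(i < M) Q M e i = e.
Proof.
move=> h3 hr; rewrite -(big_mkord xpredT).
have HNq := divn_eq M 3.
have : (M %% 3 = 0 \/ M %% 3 = 1)%N by lia.
case=> Hr; rewrite Hr ?addn0 in HNq.
- set q := (M %/ 3)%N in HNq.
  rewrite (_ : M = (3 * q.-1).+2.+1)%N; last lia.
  rewrite !big_nat_recr //= sumP; last lia.
  rewrite (@Q0a _ e (3 * q.-1)); [|lia|lia].
  rewrite (@Q1a _ e (3 * q.-1).+1); [|lia|lia].
  rewrite (@Qm _ e (3 * q.-1).+2); last lia.
  by rewrite add0r addrK.
- set q := (M %/ 3)%N in HNq.
  rewrite {1}(_ : M = (3 * q).+1)%N; last lia.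
  rewrite !big_nat_recr //= sumP; last lia.
  by rewrite (@Q0a _ e (3 * q)); [rewrite add0r|lia|lia].
Qed.

Lemma window_Q p e (i : 'I_p.+1) : (2 <= p)%N -> (e = 1 \/ e = 2) ->
  e - 2 <= \sum_(j in [set j | (j == i) || cycle_adj p.+1 i j]) Q p.+1 e j.
Proof.
move=> hp he; rewrite cyc_sum //=.
have hi := ltn_ord i; have F1 := modS_spec hi; have F2 := modP_spec hi.
have H : ((i + p) %% p.+1 %% 3 = 0 \/ i %% 3 = 0 \/ i.+1 %% p.+1 %% 3 = 0)%N.
  by move: F1 F2; move: ((i + p) %% p.+1)%N => b; move: (i.+1 %% p.+1)%N => a; lia.
have g1 := Qge p.+1 ((i + p) %% p.+1) he.
have g2 := Qge p.+1 i he.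
have g3 := Qge p.+1 (i.+1 %% p.+1) he.
by case: H => [H|[H|H]]; have := Qge0 p.+1 he H; lia.
Qed.

Lemma lower p (g : nat -> int) (G : int) : (12 <= p)%N -> periodic p.+1 g ->
  (forall k, 1 <= V g k + G) -> (p.+1)%:Z * (1 - G) <= 3 * \sum_(0 <= k < p.+1) g k.
Proof.
move=> hp P Hw; rewrite -sumV //.
have : \sum_(0 <= k < p.+1) (1 - G) <= \sum_(0 <= k < p.+1) V g k.
  by apply: ler_sum => k _; have := Hw k; lia.
by rewrite sumr_const_nat subn0 -mulr_natr mulrC natz.
Qed.



Lemma arith (p r : nat) (F G : int) : (12 <= p)%N -> (12 <= r)%N ->
  (p.+1)%:Z * (1 - G) <= 3 * F -> (r.+1)%:Z * (1 - F) <= 3 * G -> F + G < 3 -> F = 1 /\ G = 1.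
Proof. move=> hp hr h1 h2 h3. nia. Qed.

Theorem mainTheorem11 (m n : nat) :
  (13 <= m)%N -> (13 <= n)%N -> (m %% 3 != 2)%N -> (n %% 3 != 2)%N ->
  signed_roman_domination_number_is (join_adj (cycle_adj m) (cycle_adj n)) 3.
Proof.
move=> hm hn hm3 hn3.
case: m hm hm3 => [|p] // hm hm3; case: n hn hn3 => [|r] // hn hn3.
have hp : (2 <= p)%N by lia.
have hr : (2 <= r)%N by lia.
split.
- exists (fun x : ('I_p.+1 + 'I_r.+1)%type => match x with inl i => Q p.+1 1 i | inr j => Q r.+1 2 j end).
  have s1 : \sum_(i < p.+1) Q p.+1 1 i = 1 by apply: sumQ => //; lia.
  have s2 : \sum_(j < r.+1) Q r.+1 2 j = 2 by apply: sumQ => //; lia.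
  split; [split; [|split]|].
  + by case=> [i|j]; apply: Qin; auto.
  + case=> [i|j].
    * rewrite nb_inl /= s2; move: (@window_Q p 1 i hp (or_introl erefl)) => h; rewrite -lerBlDr; exact: h.
    * rewrite nb_inr /= s1; move: (@window_Q r 2 j hr (or_intror erefl)); rewrite subrr => h; rewrite addrC -lerBlDr subrr; exact: h.
  + case=> [i|j] /= _.
    * by exists (inr ord0); split=> //=; apply: Q0b => //; lia.
    * by exists (inl ord0); split=> //=; apply: Q0b => //; lia.
  + by rewrite /srdf_weight big_sumType /= s1 s2.
- move=> f [Hv [Hn Hb]].
  set F := \sum_i f (inl i); set G := \sum_j f (inr j).
  have Hn1 : forall i, 1 <= \sum_(j in [set j | (j == i) || cycle_adj p.+1 i j]) f (inl j) + G.
    by move=> i; have := Hn (inl i); rewrite nb_inl.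
  have Hn2 : forall i, 1 <= \sum_(j in [set j | (j == i) || cycle_adj r.+1 i j]) f (inr j) + F.
    by move=> i; have := Hn (inr i); rewrite nb_inr addrC.
  have [P1 [V1 [W1 S1]]] := @side p (fun i => f (inl i)) G hp (fun i => Hv _) Hn1.
  have [P2 [V2 [W2 S2]]] := @side r (fun i => f (inr i)) F hr (fun i => Hv _) Hn2.
  have L1 := lower (hm : (12 <= p)%N) P1 W1; rewrite S1 -/F in L1.
  have L2 := lower (hn : (12 <= r)%N) P2 W2; rewrite S2 -/G in L2.
  rewrite /srdf_weight big_sumType /= -/F -/G.
  rewrite leNgt; apply/negP => hlt.
  have [hF hG] := arith (hm : (12 <= p)%N) (hn : (12 <= r)%N) L1 L2 hlt.
  apply: (K (N := p.+1) (g := fun k => f (inl (inZp k)))) => //.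
  + by rewrite S1 -/F hF.
  + by move=> k; have := W1 k; rewrite hG; lia.
Qed.
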